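(* Let $\frac1{\sqrt2}<p<1$. There is $c=c(p)>0$ such that for any $a>0$ and any $n$, any local routing algorithm between the two roots of $TT_n$ (in $TT_{n,p}$) makes at least $a p^{-n}$ queries with probability at least $1-ca$.
   Context: The double binary tree $TT_n$ is obtained by taking two complete binary trees of uniform depth $n$ and identifying their corresponding leaves; its roots are the roots of the two trees. $TT_{n,p}$ is the random subgraph in which each edge is open independently with probability $p$. A routing algorithm between vertices $u,v$ may probe whether edges are open and outputs an open path from $u$ to $v$ if one exists; it is local if the first edge it probes is adjacent to $u$ and subsequently it probes only edges having an endpoint to which it has already established an open path from $u$. The number of queries is considered conditioned on the event that the two roots are connected by an open path. *)

(* Defs.v *)
From HB Require Import structures.
From mathcomp Require Import all_boot all_order all_algebra.
From mathcomp Require Import boolp reals.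
Set Implicit Arguments. Unset Strict Implicit. Unset Printing Implicit Defensive.
Import Order.TTheory GRing.Theory Num.Theory.
Local Open Scope ring_scope.

(* Each of the two complete binary trees of depth n is encoded in heap order:*)
(* the root is 1, the children of k are 2k and 2k+1, so the vertices at     *)
(* depth d are the k with 2^d <= k < 2^(d+1), and the leaves are the k with  *)
(* 2^n <= k < 2^(n+1).  A tree is tagged by a side s : bool.                 *)
(* Vertex n := bool * 'I_(2^(n+1)); the vertex (s,k) with 1 <= k < 2^n is    *)
(* the internal vertex k of tree s, and the leaf k (2^n <= k) is represented *)
(* (for both trees, this is the identification of corresponding leaves) by  *)
(* (false,k).  The remaining elements of Vertex n (k = 0, or (true,k) with   *)
(* k a leaf index) are junk and are incident to no edge.                    *)
(* An edge is (s,k) with 2 <= k < 2^(n+1): the edge of tree s between the    *)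
(* vertex k and its parent k/2.                                              *)

Definition Vertex (n : nat) := (bool * 'I_(2 ^ n.+1))%type.

Definition Edge (n : nat) := {e : bool * 'I_(2 ^ n.+1) | (1 < val e.2)%N}.

Definition vtx (n : nat) (s : bool) (k : 'I_(2 ^ n.+1)) : Vertex n :=
  if (2 ^ n <= k)%N then (false, k) else (s, k).

Lemma half_ord_proof (m : nat) (k : 'I_m) : (k./2 < m)%N.
Proof. apply: leq_ltn_trans (ltn_ord k). by rewrite leq_half_double -addnn -addSn leq_addl. Qed.

Definition parent_ord (m : nat) (k : 'I_m) : 'I_m := Ordinal (half_ord_proof k).

Definition eparent (n : nat) (e : Edge n) : Vertex n :=
  vtx (val e).1 (parent_ord (val e).2).
Definition echild (n : nat) (e : Edge n) : Vertex n :=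
  vtx (val e).1 (val e).2.

Lemma one_lt_exp2S (n : nat) : (1 < 2 ^ n.+1)%N.
Proof. by rewrite -[1%N](expn0 2) ltn_exp2l. Qed.

Definition one_ord (n : nat) : 'I_(2 ^ n.+1) := Ordinal (one_lt_exp2S n).

Definition root0 (n : nat) : Vertex n := (false, one_ord n).
Definition root1 (n : nat) : Vertex n := (true, one_ord n).

Definition adj (n : nat) (S : pred (Edge n)) : rel (Vertex n) :=
  fun x y => [exists e : Edge n, S e &&
     (((eparent e == x) && (echild e == y)) || ((eparent e == y) && (echild e == x)))].

Definition conn (n : nat) (S : pred (Edge n)) (x y : Vertex n) : bool :=
  connect (adj S) x y.

Definition config (n : nat) := {ffun Edge n -> bool}.

Definition weight (R : realType) (p : R) (n : nat) (w : config n) : R :=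
  \prod_(e : Edge n) (if w e then p else 1 - p).

Definition Pr (R : realType) (p : R) (n : nat) (A : config n -> Prop) : R :=
  \sum_(w : config n) (if `[< A w >] then weight p w else 0).

Definition condPr (R : realType) (p : R) (n : nat) (A C : config n -> Prop) : R :=
  Pr p (fun w => A w /\ C w) / Pr p C.

Definition roots_connected (n : nat) (w : config n) : Prop :=
  conn (fun e => w e) (root0 n) (root1 n).

(* A history is the list of the edges probed so far with their states.      *)
(* An algorithm maps the history to the next edge to probe, or None (stop). *)

Definition history (n : nat) := seq (Edge n * bool).

Definition algorithm (n : nat) := history n -> option (Edge n).

Fixpoint hist (n : nat) (alg : algorithm n) (w : config n) (k : nat) : history n :=
  match k with
  | 0 => [::]
  | k.+1 => let h := hist alg w k in
            match alg h with Some e => rcons h (e, w e) | None => h end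
  end.

Definition known_open (n : nat) (h : history n) : pred (Edge n) :=
  fun e => (e, true) \in h.

(* local: every probed edge has an endpoint to which an open path from the
   start root0 has already been established (for the first probe, the
   history is empty and this means the edge is adjacent to root0) *)
Definition local_alg (n : nat) (alg : algorithm n) : Prop :=
  forall (w : config n) (k : nat) (e : Edge n),
    alg (hist alg w k) = Some e ->
    conn (known_open (hist alg w k)) (root0 n) (eparent e) ||
    conn (known_open (hist alg w k)) (root0 n) (echild e).

(* routing algorithm between the two roots: on every configuration it stops,
   and when it stops, if the roots are connected by an open path, the probed
   open edges contain such a path (which it outputs) *)
Definition routes_roots (n : nat) (alg : algorithm n) : Prop :=
  forall w : config n, exists k : nat,
    alg (hist alg w k) = None /\
    (roots_connected w -> conn (known_open (hist alg w k)) (root0 n) (root1 n)).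

(* alg makes at least x queries on w: for every natural k < x, a (k+1)-th
   query is made (i.e. the number of queries Q satisfies Q >= x) *)
Definition at_least_queries (R : realType) (n : nat) (alg : algorithm n)
    (w : config n) (x : R) : Prop :=
  forall k : nat, (k%:R < x)%R -> alg (hist alg w k) <> None.

(* Main.v *)
Require Import Defs.
From HB Require Import structures.
From mathcomp Require Import all_boot all_order all_algebra.
From mathcomp Require Import boolp reals.
From mathcomp Require Import zify ring lra.
Import Order.TTheory GRing.Theory Num.Theory.
Module M1.
Local Open Scope ring_scope.
Set Implicit Arguments. Unset Strict Implicit. Unset Printing Implicit Defensive.

Section Prob.
Variables (R : realType) (p : R) (n : nat).
Local Notation cfg := (config n).

Definition phi (b : bool) : R := if b then p else 1 - p.
Definition ind (E : cfg -> Prop) (w : cfg) : R := if `[< E w >] then 1 else 0.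

Lemma PrE E : Pr p E = \sum_w ind E w * weight p w.
Proof. by apply: eq_bigr => w _; rewrite /ind; case: ifP; rewrite ?mul1r ?mul0r. Qed.

Lemma Pr_ext (E F : cfg -> Prop) : (forall w, E w <-> F w) -> Pr p E = Pr p F.
Proof.
move=> h; apply: eq_bigr => w _.
by have -> : `[< E w >] = `[< F w >] by apply/asboolP/asboolP => /h.
Qed.

Lemma phiC b : phi b + phi (~~ b) = 1.
Proof. by case: b; rewrite /phi /= ?subrK // addrC subrK. Qed.

Lemma Pr_T : Pr p (fun _ : cfg => True) = 1.
Proof.
rewrite /Pr (eq_bigr (fun w => weight p w)); last by move=> w _; rewrite asboolT.
rewrite /weight -(bigA_distr_bigA (fun (e : Edge n) (b : bool) => if b then p else 1 - p)).
by apply: big1 => e _; rewrite big_bool /= addrC subrK.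
Qed.

Lemma Pr_F : Pr p (fun _ : cfg => False) = 0.
Proof. by apply: big1 => w _; rewrite asboolF. Qed.

Lemma Pr_split (E F : cfg -> Prop) :
  Pr p E = Pr p (fun w => E w /\ F w) + Pr p (fun w => E w /\ ~ F w).
Proof.
rewrite /Pr -big_split; apply: eq_bigr => w _ /=.
case: (asboolP (E w)) => hE; case: (asboolP (F w)) => hF.
- by rewrite asboolT // asboolF ?addr0 // => -[].
- by rewrite asboolF ?asboolT ?add0r // => -[].
- by rewrite !asboolF ?addr0 // => -[].
- by rewrite !asboolF ?addr0 // => -[].
Qed.

Definition setw (g : Edge n) (b : bool) (w : cfg) : cfg :=
  [ffun e => if e == g then b else w e].

Lemma setwE g b (w : cfg) e : setw g b w e = if e == g then b else w e.
Proof. by rewrite ffunE. Qed.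

Definition flip g (w : cfg) : cfg := setw g (~~ w g) w.

Lemma flipK g : involutive (flip g).
Proof.
move=> w; apply/ffunP => e; rewrite !setwE eqxx negbK.
by case: eqP => // ->.
Qed.

Definition Rw g (w : cfg) := \prod_(e | e != g) phi (w e).

Lemma weightD g (w : cfg) : weight p w = phi (w g) * Rw g w.
Proof. by rewrite /weight (bigD1 g). Qed.

Lemma Rw_set g b (w : cfg) : Rw g (setw g b w) = Rw g w.
Proof. by apply: eq_bigr => e /negPf he; rewrite setwE he. Qed.

Lemma setw_id g b (w : cfg) : w g = b -> setw g b w = w.
Proof. by move=> h; apply/ffunP => e; rewrite setwE; case: eqP => // ->. Qed.

Definition T g E b := \sum_(w : cfg | w g == b) ind E w * Rw g w.

Lemma Pr_set g E b : Pr p (fun w => E (setw g b w)) = T g E b.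
Proof.
rewrite PrE (bigID (fun w : cfg => w g == b)) /=.
rewrite [X in _ + X](reindex_inj (can_inj (flipK g))) /=.
rewrite [X in _ + X](eq_bigl (fun w : cfg => w g == b)); last first.
  by move=> w; rewrite /flip setwE eqxx; case: (w g); case: b.
rewrite /T -[RHS]mulr1 -(phiC b) big_distrl /= -!big_split /=.
apply: eq_bigr => w.
move=> /eqP hw.
rewrite (weightD g) (weightD g (flip g w)) /flip Rw_set setwE eqxx hw.
have e1 : setw g b (setw g (~~ b) w) = w.
  by apply/ffunP => e; rewrite !setwE; case: eqP => // ->.
have e2 : setw g b w = w by apply: setw_id.
rewrite /ind e1 e2; case: asboolP => _; rewrite ?mul1r ?mul0r ?add0r //.
by rewrite mulrDr !(mulrC _ (Rw g w)).
Qed.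

Lemma Pr_cond g E :
  Pr p E = p * Pr p (fun w => E (setw g true w)) + (1 - p) * Pr p (fun w => E (setw g false w)).
Proof.
rewrite !Pr_set PrE (bigID (fun w : cfg => w g)) /= /T !big_distrr /=.
congr (_ + _); apply: eq_big => w.
- by case: (w g).
- by move=> h; rewrite (weightD g) h /phi mulrCA.
- by case: (w g).
- by move=> /negPf h; rewrite (weightD g) h /phi mulrCA.
Qed.


Definition dep (U : Edge n -> Prop) (F : cfg -> Prop) :=
  forall w w' : cfg, (forall e, U e -> w e = w' e) -> F w -> F w'.

Lemma dep_mono (U V : Edge n -> Prop) F : (forall e, U e -> V e) -> dep U F -> dep V F.
Proof. by move=> h d w w' a; apply: d => e /h; apply: a. Qed.

Lemma depE U F : dep U F -> forall w w' : cfg, (forall e, U e -> w e = w' e) -> (F w <-> F w').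
Proof. by move=> d w w' a; split; apply: d => // e /a ->. Qed.

Lemma indep_list (l : seq (Edge n)) : forall (F G : cfg -> Prop),
  dep (fun e => e \in l) G -> dep (fun e => e \notin l) F ->
  Pr p (fun w => F w /\ G w) = Pr p F * Pr p G.
Proof.
elim: l => [|g l IH] F G dG dF.
  case: (pselect (exists w, G w)) => [[w0 hw0]|hno].
    have hG : forall w, G w by move=> w; apply: (dG w0).
    rewrite (@Pr_ext G (fun _ => True)); last by move=> w; split.
    rewrite Pr_T mulr1; apply: Pr_ext => w; split; first by case.
    by move=> hw; split => //; apply: hG.
  rewrite (@Pr_ext G (fun _ => False)); last by move=> w; split => // hw; apply: hno; exists w.
  rewrite Pr_F mulr0 -(Pr_F); apply: Pr_ext => w; split => // -[_ hw]; apply: hno; by exists w.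
have hF : forall b w, F (setw g b w) <-> F w.
  move=> b w; apply: (depE dF) => e; rewrite inE negb_or => /andP [/negPf he _].
  by rewrite setwE he.
have dF' : dep (fun e => e \notin l) F.
  move=> w w' a Fw; set w'' := setw g (w' g) w.
  have Fw'' : F w'' by apply/(hF (w' g) w).
  apply: (dF w'') => // e; rewrite inE negb_or => /andP [/negPf he1 he2].
  by rewrite /w'' setwE he1 a.
have dG' : forall b, dep (fun e => e \in l) (fun w => G (setw g b w)).
  move=> b w w' a; apply: dG => e; rewrite inE => /orP [/eqP ->|/a he].
    by rewrite !setwE eqxx.
  by rewrite !setwE he.
rewrite (Pr_cond g) (Pr_cond g G).
rewrite (@Pr_ext (fun w => F (setw g true w) /\ G (setw g true w)) (fun w => F w /\ G (setw g true w))); last first.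
  by move=> w; rewrite hF.
rewrite (@Pr_ext (fun w => F (setw g false w) /\ G (setw g false w)) (fun w => F w /\ G (setw g false w))); last first.
  by move=> w; rewrite hF.
rewrite !IH //.
by rewrite mulrDr; congr (_ + _); rewrite mulrCA.
Qed.

Lemma indep (U : Edge n -> Prop) (F G : cfg -> Prop) :
  dep U G -> dep (fun e => ~ U e) F -> Pr p (fun w => F w /\ G w) = Pr p F * Pr p G.
Proof.
move=> dG dF; apply: (@indep_list [seq e <- enum (@predT (Edge n)) | `[< U e >]]).
  by apply: dep_mono dG => e ?; rewrite mem_filter mem_enum andbT; apply/asboolP.
apply: dep_mono dF => e hU; rewrite mem_filter mem_enum andbT.
by apply/negP => /asboolP.
Qed.

Lemma Pr_edge (g : Edge n) : Pr p (fun w : cfg => w g) = p.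
Proof.
rewrite (Pr_cond g) (@Pr_ext (fun w => setw g true w g) (fun _ : cfg => True)); last by move=> w; rewrite setwE eqxx.
rewrite (@Pr_ext (fun w => setw g false w g) (fun _ : cfg => False)); last by move=> w; rewrite setwE eqxx.
by rewrite Pr_T Pr_F mulr1 mulr0 addr0.
Qed.

Hypothesis p0 : 0 <= p.
Hypothesis p1 : p <= 1.

Lemma phi_ge0 b : 0 <= phi b.
Proof. by case: b; rewrite /phi ?subr_ge0. Qed.

Lemma weight_ge0 (w : cfg) : 0 <= weight p w.
Proof. by apply: prodr_ge0 => e _; apply: (phi_ge0 (w e)). Qed.

Lemma ind_ge0 E (w : cfg) : 0 <= ind E w.
Proof. by rewrite /ind; case: ifP. Qed.

Lemma Pr_le (E F : cfg -> Prop) : (forall w, E w -> F w) -> Pr p E <= Pr p F.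
Proof.
move=> h; rewrite !PrE; apply: ler_sum => w _; apply: ler_wpM2r; first exact: weight_ge0.
rewrite /ind; case: (asboolP (E w)) => hE; first by rewrite asboolT //; apply: h.
by case: ifP.
Qed.

Lemma Pr_ge0 (E : cfg -> Prop) : 0 <= Pr p E.
Proof. rewrite -(Pr_F); apply: Pr_le => w []. Qed.

Lemma Pr_le1 (E : cfg -> Prop) : Pr p E <= 1.
Proof. by rewrite -Pr_T; apply: Pr_le. Qed.

Lemma Pr_union (I : finType) (E : I -> cfg -> Prop) :
  Pr p (fun w => exists i, E i w) <= \sum_i Pr p (E i).
Proof.
rewrite PrE [in X in _ <= X](eq_bigr (fun i => \sum_w ind (E i) w * weight p w)); last by move=> i _; rewrite PrE.
rewrite exchange_big /=; apply: ler_sum => w _; rewrite -big_distrl /=.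
apply: ler_wpM2r; first exact: weight_ge0.
rewrite /ind; case: asboolP => [[i hi]|_]; last by apply: sumr_ge0 => i _; case: ifP.
by rewrite (bigD1 i) //= asboolT // lerDl; apply: sumr_ge0 => j _; case: ifP.
Qed.

Lemma Pr_sum_some (o : cfg -> option (Edge n)) :
  \sum_e Pr p (fun w => o w = Some e) <= 1.
Proof.
rewrite -Pr_T PrE [in X in X <= _](eq_bigr (fun e => \sum_w ind (fun w => o w = Some e) w * weight p w)); last by move=> i _; rewrite PrE.
rewrite exchange_big /=; apply: ler_sum => w _; rewrite -big_distrl /=.
apply: ler_wpM2r; first exact: weight_ge0.
rewrite /ind asboolT //; case E: (o w) => [e|].
  rewrite (bigD1 e) //= asboolT // big1 ?addr0 // => j /negPf hj.
  by rewrite asboolF // => -[] /eqP; rewrite eq_sym hj.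
by rewrite big1 // => j _; rewrite asboolF.
Qed.

End Prob.

End M1.
Import M1.

Module M2.
Set Implicit Arguments. Unset Strict Implicit. Unset Printing Implicit Defensive.

Section Tree.
Variable n : nat.
Local Notation cfg := (config n).

Definition oE (s : bool) (m : nat) : option (Edge n) :=
  if (insub m : option 'I_(2 ^ n.+1)) is Some i then insub (s, i) else None.

Definition opn (w : cfg) s m := if oE s m is Some e then w e else false.

Lemma oE_val (e : Edge n) : oE (val e).1 (val (val e).2) = Some e.
Proof.
rewrite /oE valK; case: e => [[s i] /= hi].
by rewrite insubT.
Qed.

Lemma opn_val w (e : Edge n) : opn w (val e).1 (val (val e).2) = w e.
Proof. by rewrite /opn oE_val. Qed.

Lemma oE_some s m e : oE s m = Some e -> (val e).1 = s /\ val (val e).2 = m.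
Proof.
rewrite /oE; case: insubP => // i _ hi; case: insubP => // x _ hx [<-].
by rewrite hx /= hi.
Qed.

Lemma oE_ex s m : (1 < m < 2 ^ n.+1)%N -> exists e, oE s m = Some e.
Proof.
case/andP => h1 h2; rewrite /oE insubT /=.
by rewrite insubT /=; eexists.
Qed.

Definition vN (s : bool) (m : nat) : Vertex n :=
  if (2 ^ n <= m)%N then (false, insubd (one_ord n) m) else (s, insubd (one_ord n) m).

Lemma vtxE s (i : 'I_(2 ^ n.+1)) : vtx s i = vN s (val i).
Proof. by rewrite /vtx /vN valKd. Qed.

Lemma eparentE (e : Edge n) : eparent e = vN (val e).1 (val (val e).2)./2.
Proof. by rewrite /eparent vtxE. Qed.

Lemma echildE (e : Edge n) : echild e = vN (val e).1 (val (val e).2).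
Proof. by rewrite /echild vtxE. Qed.

Lemma vN_val s m : (m < 2 ^ n.+1)%N -> val (vN s m).2 = m.
Proof. by move=> hm; rewrite /vN; case: ifP => _ /=; rewrite val_insubd hm. Qed.

Lemma adj_edge (S : pred (Edge n)) g : S g -> adj S (eparent g) (echild g) /\ adj S (echild g) (eparent g).
Proof.
by move=> hS; split; apply/existsP; exists g; rewrite hS !eqxx /= ?orbT.
Qed.

Lemma conn_inc (S : pred (Edge n)) x y : conn S x y ->
  y = x \/ exists g, S g /\ (eparent g = y \/ echild g = y).
Proof.
case/connectP => q; case/lastP: q => [|q z] /=; first by move=> _ ->; left.
rewrite rcons_path last_rcons => /andP [_ /existsP [g /andP [hS hg]]] ->; right.
exists g; split => //.
by case/orP: hg => /andP [/eqP h1 /eqP h2]; [right|left].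
Qed.


Definition upA (w : cfg) (m : nat) : Prop :=
  forall i, (1 < m %/ 2 ^ i)%N -> opn w true (m %/ 2 ^ i).

Lemma upA_rec w m : upA w m <-> (((1 < m)%N -> opn w true m) /\ upA w m./2).
Proof.
split.
- move=> h; split; first by move=> hm; have := h 0%N; rewrite expn0 divn1; apply.
  by move=> i; rewrite -divn2 -divnMA -expnS; apply: h.
- case=> h0 h [|i]; first by rewrite expn0 divn1.
  by rewrite expnS divnMA divn2; apply: h.
Qed.

Lemma upA_small w m : (m <= 1)%N -> upA w m.
Proof.
move=> hm i hi; exfalso; move: hi; rewrite ltnNge.
by rewrite (leq_trans (leq_div _ _) hm).
Qed.

Lemma upA_anc w m i : upA w m -> upA w (m %/ 2 ^ i).
Proof. by move=> h j; rewrite -divnMA -expnD; apply: h. Qed.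

Definition upS (m : nat) (e : Edge n) : Prop :=
  (val e).1 = true /\ exists i, val (val e).2 = m %/ 2 ^ i.

Lemma dep_upA m : dep (upS m) (fun w => upA w m).
Proof.
move=> w w' a h i hi; have := h i hi; rewrite /opn.
case E: oE => [e|] //; have [h1 h2] := oE_some E.
by rewrite a //; split => //; exists i.
Qed.

End Tree.

Section Prob2.
Local Open Scope ring_scope.
Variables (R : realType) (p : R) (n : nat).
Local Notation cfg := (config n).

Lemma Pr_upA j m : (2 ^ j <= m < 2 ^ j.+1)%N -> (m < 2 ^ n.+1)%N ->
  Pr p (fun w : cfg => upA w m) = p ^+ j.
Proof.
elim: j m => [|j IH] m hm hmn.
  rewrite expr0 -(Pr_T p n); apply: Pr_ext => w; split => // _.
  by apply: upA_small; move: hm; rewrite expn0 expn1; lia.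
have h2 : (1 < m)%N by move: hm; rewrite !expnS; have := expn_gt0 2 j; lia.
have [g hg] := oE_ex true (m := m) (n := n) (ltac:(by rewrite h2 hmn)).
have [g1 g2] := oE_some hg.
rewrite (@Pr_ext _ p _ (fun w => upA w m) (fun w => w g /\ upA w m./2)); last first.
  move=> w; rewrite upA_rec /opn hg; split.
    by case=> h0 h1; split => //; apply: h0.
  by case=> h0 h1; split.
rewrite (@indep _ p _ (upS m./2)) ?Pr_edge.
- rewrite IH ?exprS //.
    by move: hm; rewrite !expnS; lia.
  by move: hmn; lia.
- exact: dep_upA.
- move=> w w' a; rewrite a //; case=> _ [i]; rewrite g2.
  have : (m./2 %/ 2 ^ i <= m./2)%N by apply: leq_div.
  lia.
Qed.

End Prob2.

End M2.
Import M2.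

Module M3.
Set Implicit Arguments. Unset Strict Implicit. Unset Printing Implicit Defensive.

Section Alg.
Variable n : nat.
Local Notation cfg := (config n).

Definition Popen (w : cfg) (v : Vertex n) : Prop :=
  (v.1 || (2 ^ n <= val v.2)%N) /\ upA w (val v.2).

Lemma Popen_vN w (s : bool) m : (m < 2 ^ n.+1)%N ->
  Popen w (vN n s m) <-> ((s || (2 ^ n <= m)%N) /\ upA w m).
Proof.
move=> hm; rewrite /Popen vN_val // /vN; case: ifP => h /=; rewrite ?h ?orbT ?orbF //.
Qed.

Lemma edge_popen (w : cfg) (e : Edge n) : w e ->
  (Popen w (eparent e) \/ Popen w (echild e)) ->
  (~ Popen w (eparent e) \/ ~ Popen w (echild e)) ->
  (val e).1 = false /\ (2 ^ n <= val (val e).2)%N /\ upA w (val (val e).2).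
Proof.
move=> we.
have ho : opn w (val e).1 (val (val e).2) = true by rewrite opn_val.
have hk1 : (1 < val (val e).2)%N := valP e.
have hk2 : (val (val e).2 < 2 ^ n.+1)%N := ltn_ord _.
rewrite eparentE echildE.
move: ho hk1 hk2; case: (val e) => s i /=; move: (nat_of_ord i) => k ho hk1 hk2.
have hk3 : (k./2 < 2 ^ n)%N by move: hk2; rewrite expnS; lia.
have hk4 : (k./2 < 2 ^ n.+1)%N by move: hk2; lia.
rewrite !Popen_vN // (upA_rec w k) (leqNgt _ k./2) hk3 orbF.
case: s ho => ho /=.
  move=> h1 h2; exfalso; case: h2 => h2; apply: h2.
    by case: h1 => -[_ h]; split => //; case: h.
  by case: h1 => -[_ h]; split => //; split.
by case => -[] // _ [h1 h2] _; split => //; split => //; apply/upA_rec.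
Qed.


Variable alg : algorithm n.

Lemma hist_sub (w : cfg) t x : x \in hist alg w t -> x \in hist alg w t.+1.
Proof. by move=> h /=; case: (alg _) => // e; rewrite mem_rcons inE h orbT. Qed.

Lemma hist_val (w : cfg) t g b : (g, b) \in hist alg w t -> b = w g.
Proof.
elim: t => //= t IH; case: (alg _) => // e; rewrite mem_rcons inE.
by case/orP => [/eqP [-> ->]|/IH].
Qed.

Lemma hist_agree (U : Edge n -> Prop) (w w' : cfg) t :
  (forall e, ~ U e -> w e = w' e) -> (forall x, x \in hist alg w t -> ~ U x.1) ->
  hist alg w' t = hist alg w t.
Proof.
move=> a; elim: t => //= t IH h.
have IH' : hist alg w' t = hist alg w t by apply: IH => x hx; apply: h; apply: hist_sub.
rewrite IH'; case E: (alg _) => [e|] //.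
rewrite a //; apply: (h (e, w e)); rewrite /= E mem_rcons inE eqxx //.
Qed.

Lemma hist_stop (w : cfg) k : alg (hist alg w k) = None ->
  forall m, (k <= m)%N -> hist alg w m = hist alg w k.
Proof.
move=> h m; elim: m => [|m IH]; first by rewrite leqn0 => /eqP ->.
rewrite leq_eqVlt => /orP [/eqP <- //|hm].
by rewrite /= IH // h.
Qed.

Definition noUp (l : nat) (h : history n) := forall x, x \in h -> ~ upS l x.1.

Definition Bt t (w : cfg) := exists e : Edge n,
  (alg (hist alg w t) = Some e /\ noUp (val (val e).2) (hist alg w t)) /\
  ((val e).1 = false /\ (2 ^ n <= val (val e).2)%N /\ upA w (val (val e).2)).

Definition Dh (w : cfg) (h : history n) := exists g,
  known_open h g /\ (Popen w (eparent g) \/ Popen w (echild g)).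

Lemma first_change (P : nat -> Prop) k : ~ P 0%N -> P k -> exists2 t, (t < k)%N & (~ P t /\ P t.+1).
Proof.
move=> h0; elim: k => [|k IH] hk; first by [].
case: (pselect (P k)) => hPk.
  by have [t ht hh] := IH hPk; exists t => //; apply: ltnW.
by exists k.
Qed.


Lemma root_nP (hn : (0 < n)%N) (w : cfg) : ~ Popen w (Defs.root0 n).
Proof.
case => /= h _; move: h; rewrite leqNgt /=.
have : (2 ^ 1 <= 2 ^ n)%N by rewrite leq_exp2l.
by rewrite expn1 => ->.
Qed.

Lemma notP (hn : (0 < n)%N) (w : cfg) h c : conn (known_open h) (Defs.root0 n) c -> ~ Dh w h -> ~ Popen w c.
Proof.
move=> hc nD; have [->|[g [hg hv]]] := conn_inc hc; first exact: root_nP.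
move=> hP; apply: nD; exists g; split => //.
by case: hv => hv; subst c; [left|right].
Qed.

Lemma key (hn : (0 < n)%N) (loc : local_alg alg) (w : cfg) k :
  conn (known_open (hist alg w k)) (Defs.root0 n) (Defs.root1 n) -> exists2 t, (t < k)%N & Bt t w.
Proof.
move=> hc.
have Dk : Dh w (hist alg w k).
  have [h|[g [hg hv]]] := conn_inc hc; first by move: h; rewrite /Defs.root0 /Defs.root1 => -[].
  exists g; split => //.
  have hP : Popen w (Defs.root1 n) by split => //; apply: upA_small.
  by case: hv => ->; [left|right].
have D0 : ~ Dh w (hist alg w 0) by case=> g [].
have [t ht [nDt Dt1]] := @first_change (fun t => Dh w (hist alg w t)) k D0 Dk.
exists t => //.
move: Dt1 => /=; case E: (alg (hist alg w t)) => [e|]; last by [].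
case=> g [hg hP].
have [hgt|[ge we]] : known_open (hist alg w t) g \/ (g = e /\ w e).
  move: hg; rewrite /known_open mem_rcons inE => /orP [/eqP [h1 h2]|h]; last by left.
  by right; rewrite h1 -h2.
  exfalso; apply: nDt; exists g; split => //.
subst g.
have nPc : ~ Popen w (eparent e) \/ ~ Popen w (echild e).
  by case/orP: (loc w t e E) => hc'; [left|right]; apply: (notP hn hc').
have [e1 [e2 e3]] := edge_popen we hP nPc.
exists e; split; last by [].
split => // -[g b] hx [g1 [i gi]] /=; apply: nDt; exists g.
have hb := hist_val hx.
have wg : w g.
  have h1 : (1 < val (val g).2)%N := valP g.
  have := e3 i; rewrite -gi => /(_ h1).
  by rewrite -g1 opn_val.
split; first by rewrite /known_open -wg -hb.
right; rewrite echildE (Popen_vN _ _ (ltn_ord _)); split; first by rewrite g1.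
by rewrite gi; apply: upA_anc.
Qed.

End Alg.

End M3.
Import M3.

Module M4.
Set Implicit Arguments. Unset Strict Implicit. Unset Printing Implicit Defensive.

Section SubS.
Variable n : nat.
Local Notation cfg := (config n).
Fixpoint Sub (w : cfg) (h k : nat) : Prop :=
  match h with
  | 0 => True
  | h.+1 => (opn w false k.*2 /\ opn w true k.*2 /\ Sub w h k.*2) \/
            (opn w false k.*2.+1 /\ opn w true k.*2.+1 /\ Sub w h k.*2.+1)
  end.

Definition suppS (k : nat) (e : Edge n) : Prop := exists i, (0 < i)%N /\ val (val e).2 %/ 2 ^ i = k.
Definition supp0 (k : nat) (e : Edge n) : Prop := exists i, val (val e).2 %/ 2 ^ i = k.

Lemma dep_opn s m : dep (fun e : Edge n => val (val e).2 = m) (fun w => opn w s m).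
Proof.
move=> w w' a; rewrite /opn; case E: oE => [e|] //.
by have [_ h] := oE_some E; rewrite a.
Qed.

Lemma supp0_S k e : supp0 k.*2 e -> suppS k e.
Proof.
case=> i; rewrite /suppS; move: (val (val e).2) => x hi; exists i.+1; split => //.
by rewrite expnS mulnC divnMA hi -muln2 mulnK.
Qed.

Lemma supp0_S1 k e : supp0 k.*2.+1 e -> suppS k e.
Proof.
case=> i; rewrite /suppS; move: (val (val e).2) => x hi; exists i.+1; split => //.
by rewrite expnS mulnC divnMA hi divn2 /= uphalf_double.
Qed.

Lemma suppS_0 k e : suppS k e -> supp0 k e.
Proof. by case=> i [_ h]; exists i. Qed.

Lemma dep_branch h m (IH : dep (suppS m) (fun w => Sub w h m)) :
  dep (supp0 m) (fun w => opn w false m /\ opn w true m /\ Sub w h m).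
Proof.
move=> w w' a [h1 [h2 h3]]; split; [|split].
- by apply: (dep_opn (w := w)) h1 => e he; apply: a; exists 0%N; rewrite expn0 divn1.
- by apply: (dep_opn (w := w)) h2 => e he; apply: a; exists 0%N; rewrite expn0 divn1.
- by apply: (IH w) h3 => e he; apply: a; apply: suppS_0.
Qed.

Lemma dep_Sub h : forall k, dep (suppS k) (fun w => Sub w h k).
Proof.
elim: h => [|h IH] k w w' a //= [hA|hB]; [left|right].
- by apply: (dep_branch (IH k.*2) (w := w)) hA => e he; apply: a; apply: supp0_S.
- by apply: (dep_branch (IH k.*2.+1) (w := w)) hB => e he; apply: a; apply: supp0_S1.
Qed.

Lemma div_half x d : (0 < d)%N -> (x %/ 2 ^ d <= x./2)%N.
Proof.
move=> hd; rewrite -divn2; apply: leq_div2l => //.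
by rewrite -[X in (X <= _)%N](expn1 2) leq_exp2l.
Qed.

Lemma disj_supp k e : (0 < k)%N -> supp0 k.*2.+1 e -> ~ supp0 k.*2 e.
Proof.
rewrite /supp0; move: (val (val e).2) => x hk [i hi] [j hj].
have [hij|hji] := leqP i j.
  move: hj; rewrite -(subnKC hij) expnD divnMA hi.
  case E: (j - i)%N => [|d].
    by rewrite expn0 divn1; lia.
  have := div_half k.*2.+1 (ltn0Sn d); rewrite /= uphalf_double; lia.
move: hi; rewrite -(subnKC (ltnW hji)) expnD divnMA hj.
have := div_half k.*2 (d := (i - j)%N) (ltac:(lia)); rewrite doubleK; lia.
Qed.


Lemma conn_step (w : cfg) k m : m./2 = k -> (1 < m < 2 ^ n.+1)%N ->
  opn w false m -> opn w true m ->
  conn (fun e => w e) (vN n false m) (vN n true m) ->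
  conn (fun e => w e) (vN n false k) (vN n true k).
Proof.
move=> hmk hm o0 o1 hc.
have [g0 hg0] := oE_ex false (n := n) hm.
have [g1 hg1] := oE_ex true (n := n) hm.
have [a0 b0] := oE_some hg0; have [a1 b1] := oE_some hg1.
move: o0 o1; rewrite /opn hg0 hg1 => o0 o1.
have [ad0 _] := adj_edge (S := fun e => w e) o0.
have [_ ad1] := adj_edge (S := fun e => w e) o1.
move: ad0 ad1; rewrite !eparentE !echildE a0 b0 a1 b1 hmk => ad0 ad1.
rewrite /conn; apply: connect_trans (connect1 ad0) _.
exact: connect_trans hc (connect1 ad1).
Qed.

Lemma Sub_conn (w : cfg) : forall h d k, (d + h)%N = n -> (2 ^ d <= k < 2 ^ d.+1)%N ->
  Sub w h k -> conn (fun e => w e) (vN n false k) (vN n true k).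
Proof.
elim=> [|h IH] d k hdh hk /=.
  move=> _; rewrite addn0 in hdh; subst d.
  by rewrite /vN; case/andP: hk => -> _; apply: connect0.
have hdn : (d.+1 <= n)%N by lia.
have hX : (2 ^ d.+2 <= 2 ^ n.+1)%N by rewrite leq_exp2l.
have hd0 : (0 < 2 ^ d)%N by rewrite expn_gt0.
have hm1 : (1 < k.*2 < 2 ^ n.+1)%N by move: hX hk; rewrite !expnS; lia.
have hm2 : (1 < k.*2.+1 < 2 ^ n.+1)%N by move: hX hk; rewrite !expnS; lia.
have hd1 : (d.+1 + h)%N = n by lia.
case=> [[o0 [o1 hs]]|[o0 [o1 hs]]].
  apply: (conn_step (m := k.*2)) => //; first by rewrite doubleK.
  by apply: (IH d.+1) => //; move: hk; rewrite !expnS; lia.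
apply: (conn_step (m := k.*2.+1)) => //; first by rewrite /= uphalf_double.
by apply: (IH d.+1) => //; move: hk; rewrite !expnS; lia.
Qed.

Lemma vN1 s : (0 < n)%N -> vN n s 1 = (s, one_ord n).
Proof.
move=> hn; rewrite /vN.
have -> : (2 ^ n <= 1)%N = false.
  by apply/negbTE; rewrite -ltnNge -[X in (X < _)%N](expn0 2) ltn_exp2l.
by congr pair; apply: val_inj; rewrite val_insubd; case: ifP.
Qed.

Lemma Sub_roots (w : cfg) : (0 < n)%N -> Sub w n 1 -> roots_connected w.
Proof.
move=> hn hs; have := Sub_conn (d := 0) (k := 1) erefl erefl hs.
by rewrite !vN1.
Qed.

End SubS.

Section Main.
Local Open Scope ring_scope.
Variables (R : realType) (p : R) (n : nat).
Hypotheses (p0 : 0 <= p) (p1 : p <= 1).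
Local Notation cfg := (config n).

Lemma arith (r q a b : R) : 0 <= r -> r <= 1 -> 0 <= q -> q <= a -> a <= 1 -> q <= b -> b <= 1 ->
  1 - (1 - r ^+ 2 * q) ^+ 2 = q ->
  q <= r * (r * a) + (r * (r * b) - r * (r * b) * (r * (r * a))).
Proof.
move=> h0 h1 hq ha1 ha2 hb1 hb2 hq2.
set P := r ^+ 2 in hq2.
have hP0 : 0 <= P by rewrite /P exprn_ge0.
have hP1 : P <= 1 by rewrite /P expr_le1.
have hx0 : 0 <= 1 - P * a by nra.
have hy0 : 0 <= 1 - P * b by nra.
have hxz : 1 - P * a <= 1 - P * q by nra.
have hyz : 1 - P * b <= 1 - P * q by nra.
have h1' : (1 - P * a) * (1 - P * b) <= (1 - P * q) * (1 - P * b) by nra.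
have h2' : (1 - P * q) * (1 - P * b) <= (1 - P * q) * (1 - P * q) by nra.
have -> : r * (r * a) + (r * (r * b) - r * (r * b) * (r * (r * a))) = 1 - (1 - P * a) * (1 - P * b).
  by rewrite /P expr2; ring.
rewrite -hq2 expr2; lra.
Qed.


Lemma Pr_edge_and (g : Edge n) (G : cfg -> Prop) :
  dep (fun e => e <> g) G -> Pr p (fun w => w g /\ G w) = p * Pr p G.
Proof.
move=> dG; rewrite (indep p (U := fun e => e <> g)) // ?Pr_edge //.
move=> w w' a; rewrite a //; exact: (fun h => h erefl).
Qed.

Lemma Pr_Bt (alg : algorithm n) t : Pr p (Bt alg t) <= p ^+ n.
Proof.
apply: le_trans; first exact: (Pr_union p0 p1 (fun (e : Edge n) (w : cfg) =>
  (alg (hist alg w t) = Some e /\ noUp (val (val e).2) (hist alg w t)) /\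
  ((val e).1 = false /\ (2 ^ n <= val (val e).2)%N /\ upA w (val (val e).2)))).
apply: le_trans (_ : \sum_e Pr p (fun w => alg (hist alg w t) = Some e) * p ^+ n <= _).
  apply: ler_sum => e _.
  case: (pselect ((val e).1 = false /\ (2 ^ n <= val (val e).2)%N)) => [[c1 c2]|nc]; last first.
    rewrite (@Pr_ext _ p _ _ (fun _ => False)) ?Pr_F; last by move=> w; split => // -[_ [? [? _]]]; apply: nc.
    by apply: mulr_ge0; [apply: Pr_ge0 | apply: exprn_ge0].
  set l := val (val e).2.
  rewrite (@Pr_ext _ p _ _ (fun w => (alg (hist alg w t) = Some e /\ noUp l (hist alg w t)) /\ upA w l)); last first.
    by move=> w; split => [[? [_ [_ ?]]]|[? ?]].
  rewrite (indep p (U := upS l)); last first.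
  - move=> w w' a [h1 h2].
    have hh := hist_agree a h2.
    by rewrite hh; split.
  - exact: dep_upA.
  rewrite (Pr_upA p (j := n)); last by apply: ltn_ord.
    apply: ler_wpM2r; first exact: exprn_ge0.
    by apply: Pr_le => // w [].
  by rewrite c2 /= expnS; have := ltn_ord (val e).2; rewrite -/l expnS.
rewrite -big_distrl /= -[X in _ <= X]mul1r; apply: ler_wpM2r; first exact: exprn_ge0.
exact: Pr_sum_some.
Qed.



Lemma not_supp_self m (e : Edge n) : (0 < m)%N -> suppS m e -> val (val e).2 <> m.
Proof.
move=> hm [i [hi he]] hv; move: he; rewrite hv => he.
have := div_half m hi; rewrite he; lia.
Qed.

Lemma Pr_A h m : (1 < m < 2 ^ n.+1)%N ->
  Pr p (fun w : cfg => opn w false m /\ opn w true m /\ Sub w h m) = p * (p * Pr p (fun w : cfg => Sub w h m)).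
Proof.
move=> hm.
have [g0 hg0] := oE_ex false (n := n) hm.
have [g1 hg1] := oE_ex true (n := n) hm.
have [a0 b0] := oE_some hg0; have [a1 b1] := oE_some hg1.
have hm0 : (0 < m)%N by lia.
rewrite (@Pr_ext _ p _ _ (fun w => w g0 /\ (w g1 /\ Sub w h m))); last by move=> w; rewrite /opn hg0 hg1.
rewrite Pr_edge_and; last first.
  move=> w w' a [x1 x2]; split.
    by rewrite -a // => E; move: a1; rewrite E a0.
  apply: (dep_Sub (w := w)) x2 => e he; apply: a => E; subst e.
  by apply: (not_supp_self hm0 he).
rewrite Pr_edge_and //.
move=> w w' a; apply: (dep_Sub (w := w)) => e he; apply: a => E; subst e.
by apply: (not_supp_self hm0 he).
Qed.

Lemma Pr_Sub (q : R) (hq0 : 0 <= q) (hq1 : q <= 1) (hq : 1 - (1 - p ^+ 2 * q) ^+ 2 = q) :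
  forall h d k, (d + h)%N = n -> (2 ^ d <= k < 2 ^ d.+1)%N -> q <= Pr p (fun w : cfg => Sub w h k).
Proof.
elim=> [|h IH] d k hdh hk /=.
  by rewrite (Pr_T p n).
have hdn : (d.+1 <= n)%N by lia.
have hX : (2 ^ d.+2 <= 2 ^ n.+1)%N by rewrite leq_exp2l.
have hd0 : (0 < 2 ^ d)%N by rewrite expn_gt0.
have hk0 : (0 < k)%N by lia.
have hm1 : (1 < k.*2 < 2 ^ n.+1)%N by move: hX hk; rewrite !expnS; lia.
have hm2 : (1 < k.*2.+1 < 2 ^ n.+1)%N by move: hX hk; rewrite !expnS; lia.
set A := fun w : cfg => opn w false k.*2 /\ opn w true k.*2 /\ Sub w h k.*2.
set B := fun w : cfg => opn w false k.*2.+1 /\ opn w true k.*2.+1 /\ Sub w h k.*2.+1.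
rewrite (Pr_split p _ A).
rewrite (@Pr_ext _ p _ (fun w => (A w \/ B w) /\ A w) A); last by move=> w; split; [case | move=> ha; split => //; left].
rewrite (@Pr_ext _ p _ (fun w => (A w \/ B w) /\ ~ A w) (fun w => B w /\ ~ A w)); last first.
  move=> w; split => [[[ha|hb] hn]|[hb hn]]; [by case: hn | by split | by split => //; right].
have PB := Pr_split p B A.
have PBA : Pr p (fun w => B w /\ A w) = Pr p B * Pr p A.
  rewrite (indep p (U := supp0 k.*2)) //.
    by apply: dep_branch; apply: dep_Sub.
  apply: (dep_mono (U := supp0 k.*2.+1)); last by apply: dep_branch; apply: dep_Sub.
  move=> e he; exact: disj_supp hk0 he.
have -> : Pr p (fun w => B w /\ ~ A w) = Pr p B - Pr p B * Pr p A.
  by rewrite -PBA PB; lra.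
rewrite /A /B !Pr_A //.
have hd1 : (d.+1 + h)%N = n by lia.
apply: arith => //.
- apply: (IH d.+1) => //; move: hk; rewrite !expnS; lia.
- exact: Pr_le1.
- apply: (IH d.+1) => //; move: hk; rewrite !expnS; lia.
- exact: Pr_le1.
Qed.

End Main.

End M4.
Import M4.
Unset Implicit Arguments.
Local Open Scope ring_scope.

Theorem mainTheorem6 (R : realType) (p : R) :
  1 / Num.sqrt 2 < p -> p < 1 ->
  exists c : R, 0 < c /\
    forall (a : R) (n : nat), 0 < a -> (0 < n)%N ->
    forall alg : algorithm n, local_alg alg -> routes_roots alg ->
      1 - c * a <=
      condPr p (fun w => at_least_queries alg w (a * p ^- n))
               (fun w => roots_connected w).
Proof.
move=> hp hp1.
have hs : 0 < Num.sqrt 2 :> R by rewrite sqrtr_gt0.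
have p0' : 0 < p by apply: lt_trans hp; rewrite divr_gt0.
have p0 : 0 <= p := ltW p0'.
have p1 : p <= 1 := ltW hp1.
have hp2 : 1 < 2 * p ^+ 2.
  have h1 : 1 < p * Num.sqrt 2 by rewrite -ltr_pdivrMr.
  have h2 : (p * Num.sqrt 2) ^+ 2 = 2 * p ^+ 2 by rewrite exprMn sqr_sqrtr // mulrC.
  rewrite -h2; nra.
have pn0 : p != 0 by rewrite gt_eqF.
set q := (2 * p ^+ 2 - 1) / p ^+ 4.
have p4 : 0 < p ^+ 4 by rewrite exprn_gt0.
have hq0 : 0 < q by rewrite divr_gt0 // subr_gt0.
have hq1 : q <= 1.
  rewrite ler_pdivrMr // mul1r.
  have : 0 <= (p ^+ 2 - 1) ^+ 2 by apply: sqr_ge0.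
  have -> : p ^+ 4 = p ^+ 2 * p ^+ 2 by rewrite -exprD.
  nra.
have hq : 1 - (1 - p ^+ 2 * q) ^+ 2 = q.
  by rewrite /q; field.
exists (1 / q); split; first by rewrite divr_gt0.
move=> a n ha hn alg loc rt.
set x := a * p ^- n.
have hx0 : 0 <= x by apply: mulr_ge0; [exact: ltW | rewrite invr_ge0 exprn_ge0].
set P := Pr p (fun w : config n => roots_connected w).
have PC : q <= P.
  have := @Pr_Sub R p n p0 p1 q (ltW hq0) hq1 hq n 0 1 (add0n n) erefl.
  move=> H; apply: le_trans H _.
  by apply: Pr_le => // w; apply: Sub_roots.
have PCpos : 0 < P by apply: lt_le_trans PC.
set A := fun w : config n => at_least_queries alg w x.
have hsplit := Pr_split p (fun w : config n => roots_connected w) A.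
have hAC : Pr p (fun w : config n => A w /\ roots_connected w) = Pr p (fun w : config n => roots_connected w /\ A w).
  by apply: Pr_ext => w; split => -[].
have hN : Pr p (fun w : config n => roots_connected w /\ ~ A w) <= a.
  set M := Num.trunc x.
  apply: le_trans (Pr_le p0 p1 (F := fun w : config n => exists t : 'I_M, Bt alg t w) _) _.
    move=> w [hc hnA].
    have [k [hk hkN]] : exists k : nat, (k%:R < x) /\ alg (hist alg w k) = None.
      case: (pselect (exists k : nat, (k%:R < x) /\ alg (hist alg w k) = None)) => // hno.
      by exfalso; apply: hnA => k hk E; apply: hno; exists k.
    have [k' [hk' hc']] := rt w.
    have hh : hist alg w k' = hist alg w k.
      case: (leqP k k') => h; first exact: hist_stop hkN _ h.
      by symmetry; apply: hist_stop hk' _ (ltnW h).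
    have := hc' hc; rewrite hh => hc2.
    have [t ht hB] := key hn loc hc2.
    have htM : (t < M)%N.
      apply: leq_trans ht _; rewrite /M truncn_ge_nat //; exact: ltW.
    by exists (Ordinal htM).
  apply: le_trans (Pr_union p0 p1 (fun (t : 'I_M) (w : config n) => Bt alg t w)) _.
  apply: le_trans (_ : \sum_(t < M) p ^+ n <= _).
    by apply: ler_sum => t _; apply: Pr_Bt.
  rewrite sumr_const card_ord -mulr_natr.
  have hM : (M%:R : R) <= x by rewrite /M truncn_le.
  have -> : a = p ^+ n * x by rewrite /x mulrCA mulfV ?mulr1 // expf_neq0.
  by apply: ler_wpM2l => //; apply: exprn_ge0.
rewrite /condPr hAC -/P ler_pdivlMr //.
have h1 : 1 <= P / q by rewrite ler_pdivlMr // mul1r.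
rewrite mulrBl !mul1r.
have h2 : q^-1 * a * P = a * (P / q) by rewrite mulrAC mulrC [_^-1 * _]mulrC.
rewrite h2.
have h3 : a <= a * (P / q) by rewrite -[X in X <= _]mulr1 ler_wpM2l // ltW.
rewrite /P in hsplit h3 *.
lra.
Qed.
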